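(* Let $n \ge 1$, with red tanks $R_1, \ldots, R_n$ each initially containing $1$ unit of water and blue tanks $B_1, \ldots, B_n$ each initially empty. Consider the strategy: for $i = 1, \ldots, n$ (in order), for $j = 1, \ldots, n$ (in order), equilibrate $R_i$ and $B_j$. Then the total amount of water in the blue tanks at the end of this strategy is at least as large as the total amount in the blue tanks at the end of any finite sequence of pairwise equilibrations applied to the same initial configuration.
   Context: Equilibrating two tanks $a \neq b$ with water levels $x_a, x_b$ replaces both levels by $\frac{x_a+x_b}{2}$ and leaves all other tanks unchanged. *)

(* Defs.v *)
From HB Require Import structures.
From mathcomp Require Import all_boot all_order all_algebra.
Set Implicit Arguments. Unset Strict Implicit. Unset Printing Implicit Defensive.
Import Order.TTheory GRing.Theory Num.Theory.
Local Open Scope ring_scope.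

(* Tanks: inl i = red tank R_(i+1), inr j = blue tank B_(j+1). *)
Definition tank (n : nat) : finType := ('I_n + 'I_n)%type.

Definition config (R : Type) (n : nat) := tank n -> R.

Definition equilibrate (R : fieldType) (n : nat) (a b : tank n)
  (x : config R n) : config R n :=
  fun t => if (t == a) || (t == b) then (x a + x b) / 2%:R else x t.

Definition run (R : fieldType) (n : nat) (ops : seq (tank n * tank n))
  (x : config R n) : config R n :=
  foldl (fun y p => equilibrate p.1 p.2 y) x ops.

Definition init (R : fieldType) (n : nat) : config R n :=
  fun t => match t with inl _ => 1 | inr _ => 0 end.

Definition valid_ops (n : nat) (ops : seq (tank n * tank n)) : bool :=
  all (fun p => p.1 != p.2) ops.

Definition strategy (n : nat) : seq (tank n * tank n) :=
  [seq ((inl i : tank n), (inr j : tank n)) | i <- enum 'I_n, j <- enum 'I_n].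

Definition blue_total (R : fieldType) (n : nat) (x : config R n) : R :=
  \sum_(j < n) x (inr j).

Arguments init R n t : clear implicits.
Arguments strategy n : clear implicits.

(* Main.v *)
Require Import Defs.
From HB Require Import structures.
From mathcomp Require Import all_boot all_order all_algebra.
From mathcomp Require Import ring lra zify.
Import Order.TTheory GRing.Theory Num.Theory.
Local Open Scope ring_scope.

Module Aux.
Set Implicit Arguments. Unset Strict Implicit.


Section F.
Variable R : realFieldType.
Fixpoint ff (i : nat) : nat -> R :=
  match i with
  | 0 => fun _ => 0
  | i'.+1 => fix g j := match j with 0 => 1 | j'.+1 => (g j' + ff i' j'.+1) / 2%:R end
  end.
Arguments ff : simpl never.
Lemma ffSS i j : ff i.+1 j.+1 = (ff i.+1 j + ff i j.+1) / 2%:R. Proof. by []. Qed.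
Lemma ffS0 i : ff i.+1 0 = 1. Proof. by []. Qed.
Lemma ff0 j : ff 0 j = 0. Proof. by []. Qed.

Lemma ff_bnd i j : 0 <= ff i j <= 1.
Proof.
elim: i j => [|i IH] j; first by rewrite ff0 lexx ler01.
elim: j => [|j IHj]; first by rewrite ffS0 ler01 lexx.
rewrite ffSS. move: IHj (IH j.+1) => /andP[h1 h2] /andP[h3 h4]. apply/andP; split; lra.
Qed.
Lemma ff_ge0 i j : 0 <= ff i j. Proof. by case/andP: (ff_bnd i j). Qed.
Lemma ff_le1 i j : ff i j <= 1. Proof. by case/andP: (ff_bnd i j). Qed.

Lemma ffD i j : ff i j.+1 <= ff i j.
Proof.
elim: i j => [|i IH] j; first by rewrite !ff0.
elim: j => [|j IHj]; first by rewrite ffS0 ff_le1.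
have e1 := ffSS i j.+1; have e2 := ffSS i j; have := IH j.+1. lra.
Qed.
Lemma ffI i j : ff i j <= ff i.+1 j.
Proof.
elim: i j => [|i IH] j; first by rewrite ff0 ff_ge0.
elim: j => [|j IHj]; first by rewrite !ffS0.
have e1 := ffSS i.+1 j; have e2 := ffSS i j; have := IH j.+1. lra.
Qed.

Definition GG k m := \sum_(i < k) ff i.+1 m.
Lemma GG_rec k m : GG k.+1 m = GG k m + ff k.+1 m.
Proof. by rewrite /GG big_ord_recr. Qed.
Lemma GG_tel k m : GG k m = GG k m.+1 + ff k m.+1.
Proof.
elim: k => [|k IH]; first by rewrite /GG !big_ord0 ff0 addr0.
rewrite !GG_rec IH ffSS. lra.
Qed.
Lemma GG_le k m : GG k m <= k%:R.
Proof.
elim: k => [|k IH]; first by rewrite /GG big_ord0.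
rewrite GG_rec -natr1. have := ff_le1 k.+1 m. lra.
Qed.
End F.


Section Inv.
Variable R : realFieldType.
Variable n : nat.
Definition reds (X : {set tank n}) : {set 'I_n} := [set i | (inl i : tank n) \in X].
Definition blues (X : {set tank n}) : {set 'I_n} := [set j | (inr j : tank n) \in X].
Definition gX (X : {set tank n}) : R := GG R #|reds X| (n - #|blues X|).

Lemma redsD1l X i : reds (X :\ inl i) = reds X :\ i.
Proof. by apply/setP=> i'; rewrite !inE andbC. Qed.
Lemma redsD1r X j : reds (X :\ inr j) = reds X.
Proof. by apply/setP=> i'; rewrite !inE. Qed.
Lemma bluesD1l X i : blues (X :\ inl i) = blues X.
Proof. by apply/setP=> i'; rewrite !inE. Qed.
Lemma bluesD1r X j : blues (X :\ inr j) = blues X :\ j.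
Proof. by apply/setP=> i'; rewrite !inE andbC. Qed.
Lemma redsU1l X i : reds (inl i |: X) = i |: reds X.
Proof. by apply/setP=> i'; rewrite !inE. Qed.
Lemma redsU1r X j : reds (inr j |: X) = reds X.
Proof. by apply/setP=> i'; rewrite !inE. Qed.
Lemma bluesU1l X i : blues (inl i |: X) = blues X.
Proof. by apply/setP=> i'; rewrite !inE. Qed.
Lemma bluesU1r X j : blues (inr j |: X) = j |: blues X.
Proof. by apply/setP=> i'; rewrite !inE. Qed.

Lemma key (X : {set tank n}) (a b : tank n) : a \in X -> b \notin X -> 2%:R * gX X <= gX (X :\ a) + gX (b |: X).
Proof.
move=> aX bX; rewrite /gX.
have cb : forall Y : {set 'I_n}, (#|Y| <= n)%N.
  by move=> Y; rewrite -[X in (_ <= X)%N](card_ord n) max_card.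
case: a aX => [i|j] aX; case: b bX => [i2|j2] bX.
- rewrite redsD1l redsU1l bluesD1l bluesU1l.
  have iX : i \in reds X by rewrite inE.
  have i2X : i2 \notin reds X by rewrite inE.
  rewrite cardsU1 i2X (cardsD1 i (reds X)) iX /= !add1n.
  set k := #|reds X :\ i|; set m := (n - _)%N.
  rewrite !GG_rec. have := ffI R k.+1 m. lra.
- rewrite redsD1l redsU1r bluesD1l bluesU1r.
  have iX : i \in reds X by rewrite inE.
  have jX : j2 \notin blues X by rewrite inE.
  have hc := cb (j2 |: blues X). rewrite cardsU1 jX /= add1n in hc.
  rewrite cardsU1 jX (cardsD1 i (reds X)) iX /= !add1n.
  set k := #|reds X :\ i|; set l := #|blues X| in hc *.
  have -> : (n - l = (n - l.+1).+1)%N by lia.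
  set m := (n - l.+1)%N.
  rewrite (GG_tel R k.+1 m) !GG_rec. lra.
- rewrite redsD1r redsU1l bluesD1r bluesU1l.
  have jX : j \in blues X by rewrite inE.
  have iX : i2 \notin reds X by rewrite inE.
  have hc := cb (blues X). rewrite (cardsD1 j (blues X)) jX /= add1n in hc.
  rewrite cardsU1 iX (cardsD1 j (blues X)) jX /= !add1n.
  set k := #|reds X|; set l := #|blues X :\ j| in hc *.
  have -> : (n - l = (n - l.+1).+1)%N by lia.
  set m := (n - l.+1)%N.
  have e1 := GG_tel R k m; have e2 := GG_rec R k m. have := ffD R k m; have := ffI R k m. lra.
- rewrite redsD1r redsU1r bluesD1r bluesU1r.
  have jX : j \in blues X by rewrite inE.
  have j2X : j2 \notin blues X by rewrite inE.
  have hc := cb (j2 |: blues X).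
  rewrite cardsU1 j2X (cardsD1 j (blues X)) jX /= !add1n in hc.
  rewrite cardsU1 j2X (cardsD1 j (blues X)) jX /= !add1n.
  set k := #|reds X|; set l := #|blues X :\ j| in hc *.
  have -> : (n - l = (n - l.+2).+2)%N by lia.
  have -> : (n - l.+1 = (n - l.+2).+1)%N by lia.
  set m := (n - l.+2)%N.
  rewrite (GG_tel R k m) (GG_tel R k m.+1). have := ffD R k m.+1. lra.
Qed.
End Inv.


Section Run.
Variable R : realFieldType.
Variable n : nat.
Definition Inv (x : config R n) := forall X : {set tank n}, gX R X <= \sum_(t in X) x t.

Lemma eqb_sym (a b : tank n) (x : config R n) t :
  equilibrate a b x t = equilibrate b a x t.
Proof. by rewrite /equilibrate orbC addrC. Qed.

Lemma sum_in_out (a b : tank n) (x : config R n) (X : {set tank n}) :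
  a \in X -> b \notin X ->
  \sum_(t in X) equilibrate a b x t = (x a + x b) / 2%:R + \sum_(t in X :\ a) x t.
Proof.
move=> aX bX; rewrite (big_setD1 a aX) /= {1}/equilibrate eqxx /=; congr (_ + _).
apply: eq_bigr => t; rewrite !inE => /andP[ta tX].
rewrite /equilibrate (negbTE ta) /=.
have -> : (t == b) = false by apply/negP => /eqP tb; move: bX; rewrite -tb tX.
by [].
Qed.

Lemma sum_in_in (a b : tank n) (x : config R n) (X : {set tank n}) :
  a != b -> a \in X -> b \in X ->
  \sum_(t in X) equilibrate a b x t = \sum_(t in X) x t.
Proof.
move=> ab aX bX.
have bX' : b \in X :\ a by rewrite !inE eq_sym ab.
rewrite (big_setD1 a aX) (big_setD1 b bX') (big_setD1 a aX) (big_setD1 b bX') /=.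
rewrite {1}/equilibrate eqxx {1}/equilibrate eqxx orbT.
have -> : \sum_(i in X :\ a :\ b) equilibrate a b x i = \sum_(i in X :\ a :\ b) x i.
  apply: eq_bigr => t; rewrite !inE => /andP[tb /andP[ta _]].
  by rewrite /equilibrate (negbTE ta) (negbTE tb).
rewrite /=. lra.
Qed.

Lemma sum_out_out (a b : tank n) (x : config R n) (X : {set tank n}) :
  a \notin X -> b \notin X ->
  \sum_(t in X) equilibrate a b x t = \sum_(t in X) x t.
Proof.
move=> aX bX; apply: eq_bigr => t tX.
rewrite /equilibrate.
have -> : (t == a) = false by apply/negP => /eqP ta; move: aX; rewrite -ta tX.
have -> : (t == b) = false by apply/negP => /eqP tb; move: bX; rewrite -tb tX.
by [].
Qed.

Lemma key_step (a b : tank n) (x : config R n) (X : {set tank n}) :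
  Inv x -> a \in X -> b \notin X -> gX R X <= \sum_(t in X) equilibrate a b x t.
Proof.
move=> I aX bX; rewrite sum_in_out //.
have h1 := I (X :\ a); have h2 := I (b |: X); have k := key R aX bX.
rewrite (big_setU1 _ bX) /= (big_setD1 a aX) /= in h2.
lra.
Qed.

Lemma Inv_eq (a b : tank n) (x : config R n) : a != b -> Inv x -> Inv (equilibrate a b x).
Proof.
move=> ab I X.
case aX: (a \in X); case bX: (b \in X).
- by rewrite sum_in_in.
- by apply: key_step => //; rewrite bX.
- rewrite (eq_bigr (fun t => equilibrate b a x t)); last by move=> t _; exact: eqb_sym.
  by apply: key_step => //; rewrite aX.
- by rewrite sum_out_out ?aX ?bX.
Qed.

Lemma Inv_run ops (x : config R n) : valid_ops ops -> Inv x -> Inv (run ops x).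
Proof.
elim: ops x => [|p ops IH] x //= /andP[hp hv] I.
by apply: IH => //; apply: Inv_eq.
Qed.

Lemma Inv_init : Inv (init R n).
Proof.
move=> X; rewrite (big_sumType _ (fun t => t \in X)) /=.
rewrite big1_eq addr0 (eq_bigl (fun i => i \in reds X)); last by move=> i; rewrite inE.
rewrite sumr_const /gX. apply: GG_le.
Qed.
End Run.


Section Strat.
Variable R : realFieldType.
Variable n : nat.
Local Notation ff := (ff R).

Definition St (i k : nat) (x : config R n) :=
  (forall i' : 'I_n, x (inl i') =
     if (i' < i)%N then ff i'.+1 n else if (i' == i :> nat) then ff i.+1 k else 1) /\
  (forall j : 'I_n, x (inr j) = if (j < k)%N then ff i.+1 j.+1 else ff i j.+1).

Lemma run_cat s1 s2 (x : config R n) : run (s1 ++ s2) x = run s2 (run s1 x).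
Proof. by rewrite /run foldl_cat. Qed.

Lemma eq_ll (a b : 'I_n) : ((inl a : tank n) == inl b) = (a == b). Proof. by []. Qed.
Lemma eq_rr (a b : 'I_n) : ((inr a : tank n) == inr b) = (a == b). Proof. by []. Qed.
Lemma eq_lr (a b : 'I_n) : ((inl a : tank n) == inr b) = false. Proof. by []. Qed.
Lemma eq_rl (a b : 'I_n) : ((inr a : tank n) == inl b) = false. Proof. by []. Qed.

Lemma St_step (i0 j : 'I_n) k x : val j = k -> St i0 k x ->
  St i0 k.+1 (equilibrate (inl i0 : tank n) (inr j : tank n) x).
Proof.
move=> jk [hr hb].
have hm : (x (inl i0) + x (inr j)) / 2%:R = ff i0.+1 k.+1.
  by rewrite hr hb ltnn eqxx jk ltnn ffSS.
split.
- move=> i'; rewrite /equilibrate hm eq_ll eq_lr orbF.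
  case: (eqVneq i' i0) => [->|ne].
  + by rewrite ltnn eqxx.
  + rewrite hr; have : (val i' != val i0) by [].
    by move=> /negbTE ->.
- move=> j'; rewrite /equilibrate hm eq_rr eq_rl.
  case: (eqVneq j' j) => [->|ne].
  + by rewrite orbT jk ltnSn.
  + rewrite orbF hb.
    have -> : (j' < k.+1)%N = (j' < k)%N.
      rewrite ltnS leq_eqVlt.
      have -> : (val j' == k) = false by rewrite -jk; apply/negbTE.
      by [].
    by [].
Qed.

Lemma inner (i0 : 'I_n) d k x : (k + d)%N = n -> St i0 k x ->
  St i0 n (run [seq ((inl i0 : tank n), (inr j : tank n)) | j <- drop k (enum 'I_n)] x).
Proof.
elim: d k x => [|d IH] k x hkd hs.
- rewrite addn0 in hkd; subst k.
  by rewrite drop_oversize // size_enum_ord.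
- have kn : (k < n)%N by lia.
  rewrite (drop_nth i0) ?size_enum_ord // /=.
  apply: IH; first by lia.
  apply: St_step => //. exact: nth_enum_ord.
Qed.

Lemma St_next (i0 : 'I_n) x : St i0 n x -> St i0.+1 0 x.
Proof.
move=> [hr hb]; split.
- move=> i'; rewrite hr.
  case: (ltngtP i' i0) => h.
  + have -> : (i' < i0.+1)%N = true by rewrite ltnS ltnW.
    by [].
  + have -> : (i' < i0.+1)%N = false by rewrite ltnS leqNgt h.
    rewrite ffS0. by case: (_ == _).
  + by rewrite h ltnSn.
- by move=> j; rewrite hb ltn_ord.
Qed.

Lemma outer d i x : (i + d)%N = n -> St i 0 x ->
  St n 0 (run [seq ((inl a : tank n), (inr b : tank n)) | a <- drop i (enum 'I_n), b <- enum 'I_n] x).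
Proof.
elim: d i x => [|d IH] i x hid hs.
- rewrite addn0 in hid; subst i.
  by rewrite drop_oversize // size_enum_ord.
- have kn : (i < n)%N by lia.
  have i0 : 'I_n := Ordinal kn.
  rewrite (drop_nth i0) ?size_enum_ord // allpairs_cons run_cat.
  apply: IH; first by lia.
  set o := nth i0 (enum 'I_n) i.
  have ho : val o = i by apply: nth_enum_ord.
  have := @inner o n 0 x (add0n n).
  rewrite drop0 => h. rewrite -ho. apply: St_next.
  apply: h. by rewrite ho.
Qed.

Lemma St_init : St 0 0 (init R n).
Proof.
split => [i'|j] /=; last by [].
by case: (i' == 0%N :> nat).
Qed.

Lemma strat_reds (i : 'I_n) :
  run (strategy n) (init R n) (inl i) = ff i.+1 n.
Proof.
have := @outer n 0 (init R n) (add0n n) St_init.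
rewrite drop0 => [[hr _]].
by rewrite hr ltn_ord.
Qed.
End Strat.

Section Final.
Variable R : realFieldType.
Variable n : nat.

Lemma sum_eq_all (a b : tank n) (x : config R n) :
  \sum_t equilibrate a b x t = \sum_t x t.
Proof.
case: (eqVneq a b) => [<-|ab].
  apply: eq_bigr => t _; rewrite /equilibrate orbb.
  case: eqP => [->|_] //; lra.
have := sum_in_in x ab (in_setT a) (in_setT b).
by rewrite !(eq_bigl predT) // => t; rewrite in_setT.
Qed.

Lemma sum_run ops (x : config R n) : \sum_t run ops x t = \sum_t x t.
Proof. by elim: ops x => [|p ops IH] x //=; rewrite IH sum_eq_all. Qed.

Lemma sum_split (x : config R n) :
  \sum_t x t = \sum_i x (inl i) + blue_total x.
Proof. by rewrite (big_sumType _ predT). Qed.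

Lemma sum_init : \sum_t init R n t = n%:R.
Proof.
rewrite sum_split /blue_total big1_eq addr0 sumr_const card_ord. by [].
Qed.

Definition Xr : {set tank n} := [set t | if t is inl _ then true else false].

Lemma gXr : gX R Xr = GG R n n.
Proof.
rewrite /gX.
have -> : reds Xr = setT by apply/setP => i; rewrite !inE.
have -> : blues Xr = set0 by apply/setP => i; rewrite !inE.
by rewrite cards0 cardsT card_ord subn0.
Qed.

Lemma sumXr (x : config R n) : \sum_(t in Xr) x t = \sum_i x (inl i).
Proof.
rewrite (big_sumType _ (fun t => t \in Xr)) /= [X in _ + X]big_pred0 ?addr0; last by move=> j; rewrite inE.
by apply: eq_bigl => i; rewrite inE.
Qed.
End Final.
End Aux.
Import Aux.

Theorem mainTheorem4 (R : realFieldType) (n : nat) (hn : (1 <= n)%N)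
  (ops : seq (tank n * tank n)) (hops : valid_ops ops) :
  blue_total (run ops (init R n)) <= blue_total (run (strategy n) (init R n)).
Proof.
have I := Inv_run hops (@Inv_init R n) (Xr n).
rewrite gXr sumXr in I.
have e1 := sum_split (run ops (init R n)).
have e2 := sum_split (run (strategy n) (init R n)).
rewrite sum_run sum_init in e1. rewrite sum_run sum_init in e2.
have e3 : \sum_i run (strategy n) (init R n) (inl i) = GG R n n.
  by rewrite /GG; apply: eq_bigr => i _; rewrite strat_reds.
lra.
Qed.
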